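(* Let $q=2^m$ with $m$ a positive integer. Let $\delta\in\mathbb{F}_{q^2}$, $b\in\mathbb{F}_q^*$, and let $i$ be a non-negative integer with $b\,\mathrm{Tr}_{q^2/q}(\delta)^{2^i+1}=1$. Then the compositional inverse of $$P(x)=b(x^q+x+\delta)^{2^i+q+1}+x$$ over $\mathbb{F}_{q^2}$ is $$P^{-1}(x)=x+b\left(\left(\mathrm{Tr}_{q^2/q}(\delta)(x^q+x)+\delta^{q+1}\right)^{q/2}+\delta\right)^{2^i+q+1}.$$
   Context: $\mathrm{Tr}_{q^2/q}(y)=y+y^q$. The compositional inverse of a permutation polynomial $f$ of $\mathbb{F}_{Q}$ is the unique polynomial $f^{-1}$ (modulo $x^Q-x$) with $f(f^{-1}(c))=f^{-1}(f(c))=c$ for all $c\in\mathbb{F}_Q$; in particular the statement includes that $P$ permutes $\mathbb{F}_{q^2}$. *)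

(* Defs.v *)
From HB Require Import structures.
From mathcomp Require Import all_boot all_order all_algebra all_field.
Set Implicit Arguments. Unset Strict Implicit. Unset Printing Implicit Defensive.
Import GRing.Theory.
Local Open Scope ring_scope.

(* Relative trace Tr_{q^2/q}(y) = y + y^q on a field F (intended |F| = q^2). *)
Definition trq2q (F : fieldType) (q : nat) (y : F) : F := y + y ^+ q.

Definition Ppoly (F : fieldType) (q i : nat) (b delta : F) (x : F) : F :=
  b * (x ^+ q + x + delta) ^+ (2 ^ i + q + 1) + x.

Definition Pinv (F : fieldType) (q i : nat) (b delta : F) (x : F) : F :=
  x + b * ((trq2q q delta * (x ^+ q + x) + delta ^+ (q + 1)) ^+ (q %/ 2)
            + delta) ^+ (2 ^ i + q + 1).

(* Main.v *)
Require Import Defs.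
From HB Require Import structures.
From mathcomp Require Import all_boot all_order all_algebra all_field.
From mathcomp Require Import ring.
Local Open Scope ring_scope.
Import GRing.Theory.

Lemma char2E (F : fieldType) (h2 : (2:F) = 0) (k a c : F) :
  a = c + 2 * k -> a = c.
Proof. by rewrite h2 mul0r addr0. Qed.
Arguments char2E [F] h2 k [a c].

Lemma frob2 (F : fieldType) (h2 : (2:F) = 0) (n : nat) (a c : F) :
  (a + c) ^+ (2 ^ n) = a ^+ (2 ^ n) + c ^+ (2 ^ n).
Proof.
elim: n => [|n IH]; first by rewrite expn0 !expr1.
rewrite expnSr !exprM IH.
by apply: (char2E h2 (a ^+ (2 ^ n) * c ^+ (2 ^ n))); ring.
Qed.

Theorem theorem3p7 (F : finFieldType) (m : nat) (q : nat) (i : nat)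
    (b delta : F) :
  (0 < m)%N -> q = (2 ^ m)%N -> #|F| = (q ^ 2)%N ->
  b ^+ q = b -> b != 0 ->
  b * trq2q q delta ^+ (2 ^ i + 1) = 1 ->
  bijective (Ppoly q i b delta) /\
  (forall c : F, Ppoly q i b delta (Pinv q i b delta c) = c) /\
  (forall c : F, Pinv q i b delta (Ppoly q i b delta c) = c).
Proof.
move=> m0 hq hF hbq hb0 hb.
have h2 : (2:F) = 0.
  apply: (@pcharf0 _ 2); apply: (@card_finPcharP _ _ (m * 2)) => //.
  by rewrite hF hq -expnM.
have fr (a c : F) : (a + c) ^+ q = a ^+ q + c ^+ q by rewrite hq frob2.
have qq2 (a : F) : a ^+ q ^+ q = a.
  by rewrite -exprM mulnn -hF expf_card.
have inv1 : forall x, Pinv q i b delta (Ppoly q i b delta x) = x.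
  move=> x; rewrite /Pinv /Ppoly.
  set t := x ^+ q + x.
  set T := trq2q q delta.
  have hT : T = delta + delta ^+ q by [].
  have hTq : T ^+ q = T by rewrite hT fr qq2 addrC.
  set y := t + delta.
  have hyq : y ^+ q = y + T.
    rewrite /y /t hT !fr qq2.
    by apply: (char2E h2 (- delta)); ring.
  set e := (2 ^ i + q + 1)%N.
  have hye : y ^+ e = y ^+ (2 ^ i) * (y + T) * y.
    by rewrite /e !exprD expr1 hyq.
  have hyeq : (y ^+ e) ^+ q = (y ^+ (2 ^ i) + T ^+ (2 ^ i)) * y * (y + T).
    rewrite -exprM mulnC exprM hyq /e !exprD expr1 frob2 // fr hTq hyq.
    by apply: (char2E h2 ((y ^+ (2 ^ i) + T ^+ (2 ^ i)) * T * (y + T))); ring.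
  have hz : (b * y ^+ e + x) ^+ q + (b * y ^+ e + x)
            = b * T ^+ (2 ^ i) * (y * (y + T)) + t.
    rewrite fr exprMn hbq hyeq hye /t.
    by apply: (char2E h2 (b * y ^+ (2 ^ i) * y * (y + T))); ring.
  have hb' : b * T ^+ (2 ^ i) * T = 1.
    by rewrite -mulrA -exprSr -addn1.
  have hw : T * ((b * y ^+ e + x) ^+ q + (b * y ^+ e + x)) + delta ^+ (q + 1)
            = t ^+ 2.
    rewrite hz.
    have -> : T * (b * T ^+ (2 ^ i) * (y * (y + T)) + t) + delta ^+ (q + 1)
       = (b * T ^+ (2 ^ i) * T) * (y * (y + T)) + T * t + delta ^+ q * delta.
      by rewrite exprD expr1; ring.
    rewrite hb' mul1r /y hT.
    apply: (char2E h2 (2 * t * delta + t * delta ^+ q + delta ^+ 2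
                       + delta * delta ^+ q)); ring.
  rewrite hw -exprM.
  have -> : (2 * (q %/ 2))%N = q.
    rewrite hq; case: m m0 {hq hF} => // m' _.
    by rewrite expnS mulKn.
  have -> : t ^+ q = t by rewrite /t fr qq2 addrC.
  rewrite -/y.
  by apply: (char2E h2 (b * y ^+ e)); ring.
have injP : injective (Ppoly q i b delta) := can_inj inv1.
have bijP := injF_bij injP.
split => //; split => // c.
case: bijP => g _ gK.
by rewrite -{1}(gK c) inv1 gK.
Qed.
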